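(* For any parameter of the ranking block, for every instance $I$ (with $n,m\ge1$) and every preference profile $\succcurlyeq_I$ reported truthfully, the matching matrix $\hat{\bm M}_I$ output by NeuralSD at inference satisfies $irv(\hat{\bm M}_I,\succcurlyeq_I)\le 1/2$; i.e. $\max_{I}irv(\hat{\bm M}_I,\succcurlyeq_I)\le1/2$.
   Context: An instance consists of workers $W=\{w_1,\dots,w_n\}$, firms $F=\{f_1,\dots,f_m\}$ and public contexts $\bm X_W\in\mathbb R^{n\times d}$, $\bm X_F\in\mathbb R^{m\times d}$. Workers have linear-order preferences on $F\cup\{\perp\}$, firms on $W\cup\{\perp\}$ ($\perp$ = unmatched); $b\succ_a b'$ means $b\ne b'$, $b\succcurlyeq_a b'$. Serial dictatorship (SD) with ranking $\bm r$ of $W\cup F$: for $k=1,\dots,n+m$, if $r_k$ is not yet matched, it is assigned its most preferred option among $\perp$ and the not-yet-matched agents of the other side. NeuralSD at inference: compute $\bm X=[\bm X_W;\bm X_F]$, $\bm A=\mathrm{softmax}_{\rm row}(\bm X\bm W^Q(\bm X\bm W^K)^\top/\sqrt{d_{\rm emb}})\bm X\bm W^V$, scores $\bm a=\bm w\bm A^\top+b$, tie-broken scores $\bm a+\mathrm{rank}(\bm a)$ with $\mathrm{rank}(\bm a)_i=\#\{j:a_j<a_i\text{ or }(a_j=a_i,j<i)\}$; sort agents by these scores (argsort) to get a ranking $\bm r$, and output the SD matching with ranking $\bm r$ on the reports. Matching matrix $\bm M\in\{0,1\}^{(n+1)\times(m+1)}$: $M_{ij}=1$ iff $w_i$ matched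 with $f_j$, $M_{i,m+1}=1$ iff $w_i$ unmatched, $M_{n+1,j}=1$ iff $f_j$ unmatched, $M_{n+1,m+1}=0$. For $i\in[n],j\in[m]$: $p_{ij}=\frac1m\big(\mathbb I[f_j\succ_{w_i}\perp]+\sum_{j''=1}^m(\mathbb I[f_j\succ_{w_i}f_{j''}]-\mathbb I[\perp\succ_{w_i}f_{j''}])\big)$, $q_{ji}=\frac1n\big(\mathbb I[w_i\succ_{f_j}\perp]+\sum_{i''=1}^n(\mathbb I[w_i\succ_{f_j}w_{i''}]-\mathbb I[\perp\succ_{f_j}w_{i''}])\big)$, and $irv(\bm M,\succcurlyeq)=\frac1{2n}\sum_{i,j}M_{ij}\max\{-q_{ji},0\}+\frac1{2m}\sum_{i,j}M_{ij}\max\{-p_{ij},0\}$ (sums over $i\in[n],j\in[m]$). *)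

(* Defs.v *)
From HB Require Import structures.
From mathcomp Require Import all_boot all_order all_algebra.
From mathcomp Require Import reals.
From mathcomp.analysis Require Import sequences exp.
Set Implicit Arguments. Unset Strict Implicit. Unset Printing Implicit Defensive.
Import Order.TTheory GRing.Theory Num.Theory.
Local Open Scope ring_scope.

(* Preferences.  Workers are 'I_n, firms are 'I_m, ⊥ is [None].           *)
(* A linear order on F ∪ {⊥} is given by an injective utility              *)
Definition strict_pref (T : Type) (u : T -> nat) (b b' : T) : bool :=
  (u b' < u b)%N.

Section SD.
Variables (n m : nat).
Variable pw : 'I_n -> option 'I_m -> nat.
Variable pf : 'I_m -> option 'I_n -> nat.

(* State of serial dictatorship: partner of each worker (None = unmatched
   so far / ⊥), set of already-assigned workers, set of assigned firms. *)
Definition sd_state := ({ffun 'I_n -> option 'I_m} * {set 'I_n} * {set 'I_m})%type.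

Definition availF (AF : {set 'I_m}) (o : option 'I_m) : bool :=
  if o is Some j then j \notin AF else true.
Definition availW (AW : {set 'I_n}) (o : option 'I_n) : bool :=
  if o is Some i then i \notin AW else true.

Definition set_partner (mu : {ffun 'I_n -> option 'I_m}) (i : 'I_n) (j : 'I_m) :
  {ffun 'I_n -> option 'I_m} := [ffun i' => if i' == i then Some j else mu i'].

(* Agent k of the ranking: index k < n is worker k, index n + j is firm j. *)
Definition sd_step (st : sd_state) (k : 'I_(n + m)) : sd_state :=
  let: (mu, AW, AF) := st in
  match split k with
  | inl i =>
      if i \in AW then st else
      match [arg max_(o > (None : option 'I_m) | availF AF o) pw i o] with
      | Some j => (set_partner mu i j, i |: AW, j |: AF)
      | None => (mu, i |: AW, AF)
      end
  | inr j =>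
      if j \in AF then st else
      match [arg max_(o > (None : option 'I_n) | availW AW o) pf j o] with
      | Some i => (set_partner mu i j, i |: AW, j |: AF)
      | None => (mu, AW, j |: AF)
      end
  end.

Definition serial_dictatorship (r : seq 'I_(n + m)) : {ffun 'I_n -> option 'I_m} :=
  (foldl sd_step ([ffun=> None], set0, set0) r).1.1.

End SD.

Definition matching_matrix (R : nzRingType) n m (mu : {ffun 'I_n -> option 'I_m}) :
  'M[R]_(n.+1, m.+1) :=
  \matrix_(i, j)
    match unlift ord_max i, unlift ord_max j with
    | Some i', Some j' => (mu i' == Some j')%:R
    | Some i', None => (mu i' == None)%:R
    | None, Some j' => [forall i' : 'I_n, mu i' != Some j']%:R
    | None, None => 0
    end.

Section IRV.
Variables (R : realFieldType) (n m : nat).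
Variable pw : 'I_n -> option 'I_m -> nat.
Variable pf : 'I_m -> option 'I_n -> nat.

Definition p_w (i : 'I_n) (j : 'I_m) : R :=
  m%:R^-1 * ((strict_pref (pw i) (Some j) None)%:R
    + \sum_(j'' < m) ((strict_pref (pw i) (Some j) (Some j''))%:R
                      - (strict_pref (pw i) None (Some j''))%:R)).

Definition q_f (j : 'I_m) (i : 'I_n) : R :=
  n%:R^-1 * ((strict_pref (pf j) (Some i) None)%:R
    + \sum_(i'' < n) ((strict_pref (pf j) (Some i) (Some i''))%:R
                      - (strict_pref (pf j) None (Some i''))%:R)).

Definition inner_w (i : 'I_n) : 'I_n.+1 := widen_ord (leqnSn n) i.
Definition inner_f (j : 'I_m) : 'I_m.+1 := widen_ord (leqnSn m) j.

Definition irv (M : 'M[R]_(n.+1, m.+1)) : R :=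
  (2 * n%:R)^-1 * \sum_(i < n) \sum_(j < m)
      M (inner_w i) (inner_f j) * Num.max (- q_f j i) 0
  + (2 * m%:R)^-1 * \sum_(i < n) \sum_(j < m)
      M (inner_w i) (inner_f j) * Num.max (- p_w i j) 0.
End IRV.

Section NeuralSD.
Variable R : realType.

Definition softmax_row N (S : 'M[R]_N) : 'M[R]_N :=
  \matrix_(i, j) (expR (S i j) / \sum_(k < N) expR (S i k)).

Definition neural_scores N d de dv (X : 'M[R]_(N, d))
    (WQ WK : 'M[R]_(d, de)) (WV : 'M[R]_(d, dv)) (w : 'rV[R]_dv) (b : R)
    : 'rV[R]_N :=
  let S := (Num.sqrt (de%:R))^-1 *: ((X *m WQ) *m (X *m WK)^T) in
  let A := softmax_row S *m (X *m WV) in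
  w *m A^T + const_mx b.

Definition tie_rank N (a : 'rV[R]_N) (i : 'I_N) : nat :=
  #|[set j : 'I_N | (a 0 j < a 0 i) || ((a 0 j == a 0 i) && (j < i)%N)]|.

Definition tie_broken N (a : 'rV[R]_N) (i : 'I_N) : R := a 0 i + (tie_rank a i)%:R.

Definition argsort N (s : 'I_N -> R) : seq 'I_N :=
  sort (fun i j => (s i < s j) || ((s i == s j) && (i <= j)%N)) (enum 'I_N).

Definition neuralSD_matching n m d de dv (XW : 'M[R]_(n, d)) (XF : 'M[R]_(m, d))
    (WQ WK : 'M[R]_(d, de)) (WV : 'M[R]_(d, dv)) (w : 'rV[R]_dv) (b : R)
    (pw : 'I_n -> option 'I_m -> nat) (pf : 'I_m -> option 'I_n -> nat)
    : 'M[R]_(n.+1, m.+1) :=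
  let X := col_mx XW XF in
  let a := neural_scores X WQ WK WV w b in
  matching_matrix R (serial_dictatorship pw pf (argsort (tie_broken a))).
End NeuralSD.

(* Main.v *)
Require Import Defs.
From HB Require Import structures.
From mathcomp Require Import all_boot all_order all_algebra.
From mathcomp Require Import reals.
From mathcomp.analysis Require Import sequences exp.
From mathcomp Require Import lra.
Import Order.TTheory GRing.Theory Num.Theory.
Set Implicit Arguments. Unset Strict Implicit. Unset Printing Implicit Defensive.
Section Inv.
Variables (n m : nat) (pw : 'I_n -> option 'I_m -> nat) (pf : 'I_m -> option 'I_n -> nat).
Hypotheses (pwI : forall i, injective (pw i)) (pfI : forall j, injective (pf j)).

Definition goodp (i : 'I_n) (j : 'I_m) : bool :=
  (pw i None < pw i (Some j))%N || (pf j None < pf j (Some i))%N.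

Definition inv (st : sd_state n m) : Prop :=
  let: (mu, AW, AF) := st in
  [/\ forall i, i \notin AW -> mu i = None,
     forall i j, mu i = Some j -> j \in AF,
     forall i1 i2 j, mu i1 = Some j -> mu i2 = Some j -> i1 = i2 &
     forall i j, mu i = Some j -> goodp i j].

Lemma set_partnerE (mu : {ffun 'I_n -> option 'I_m}) i j i' : set_partner mu i j i' = if i' == i then Some j else mu i'.
Proof. by rewrite /set_partner ffunE. Qed.

Lemma inv_add (mu : {ffun 'I_n -> option 'I_m}) AW AF i j : inv (mu, AW, AF) -> i \notin AW -> j \notin AF -> goodp i j ->
  inv (set_partner mu i j, i |: AW, j |: AF).
Proof.
case=> Ha Hb Hc Hd iA jA g; split.
- move=> i'; rewrite in_setU1 negb_or => /andP[ne nA].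
  by rewrite set_partnerE (negbTE ne) Ha.
- move=> i' j'; rewrite set_partnerE in_setU1; case: eqP => _.
    by case=> ->; rewrite eqxx.
  by move/Hb ->; rewrite orbT.
- move=> i1 i2 j'; rewrite !set_partnerE.
  case: (eqVneq i1 i) => [->|n1]; case: (eqVneq i2 i) => [->|n2] //.
  + by case=> <- /Hb; rewrite (negbTE jA).
  + by move=> /Hb jj [] eq; move: jj; rewrite -eq (negbTE jA).
  + exact: Hc.
- move=> i' j'; rewrite set_partnerE; case: eqP => [->|_]; first by case=> <-.
  exact: Hd.
Qed.

Lemma inv_step st k : inv st -> inv (sd_step pw pf st k).
Proof.
case: st => [[mu AW] AF] H; rewrite /sd_step.
case: (split k) => [i|j].
- case: ifP => // iA.
  case: arg_maxnP => //= [[j|]] Pj Hmax.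
  + apply: inv_add => //; first by rewrite iA.
    apply/orP; left; have := Hmax None isT; rewrite leq_eqVlt; case/orP=> //.
    by move/eqP/pwI.
  + case: H => Ha Hb Hc Hd; split => //.
    move=> i'; rewrite in_setU1 negb_or => /andP[_]; exact: Ha.
- case: ifP => // jA.
  case: arg_maxnP => //= [[i|]] Pi Hmax.
  + apply: inv_add => //; last first.
      apply/orP; right; have := Hmax None isT; rewrite leq_eqVlt; case/orP=> //.
      by move/eqP/pfI.
    by rewrite jA.
  + case: H => Ha Hb Hc Hd; split => //.
    by move=> i' j' /Hb jj; rewrite in_setU1 jj orbT.
Qed.

Lemma inv_sd r : inv (foldl (sd_step pw pf) ([ffun=> None], set0, set0) r).
Proof.
have: inv ([ffun=> None], set0, set0) by split => // ? ?; rewrite ffunE.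
elim: r ([ffun=> None], set0, set0) => //= k r IH st H; exact/IH/inv_step.
Qed.

Lemma sd_props r (mu := serial_dictatorship pw pf r) :
  (forall i1 i2 j, mu i1 = Some j -> mu i2 = Some j -> i1 = i2) /\
  (forall i j, mu i = Some j -> goodp i j).
Proof.
rewrite /mu /serial_dictatorship; have := inv_sd r.
by case: foldl => [[mu' AW] AF] [].
Qed.
End Inv.
Local Open Scope ring_scope.
Section Num.
Variables (R : realFieldType) (n m : nat) (pw : 'I_n -> option 'I_m -> nat) (pf : 'I_m -> option 'I_n -> nat).

Lemma inner_wE (i : 'I_n) : inner_w i = lift ord_max i.
Proof. by apply: val_inj; rewrite /= /bump leqNgt ltn_ord. Qed.
Lemma inner_fE (j : 'I_m) : inner_f j = lift ord_max j.
Proof. by apply: val_inj; rewrite /= /bump leqNgt ltn_ord. Qed.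

Lemma entryE (mu : {ffun 'I_n -> option 'I_m}) i j :
  matching_matrix R mu (inner_w i) (inner_f j) = (mu i == Some j)%:R.
Proof. by rewrite inner_wE inner_fE /matching_matrix mxE !liftK. Qed.

Lemma q_ge (j : 'I_m) (i : 'I_n) : (0 < n)%N -> -1 <= q_f R pf j i.
Proof.
move=> n0; rewrite /q_f.
have nP : (0 : R) < n%:R by rewrite ltr0n.
have -> : (-1 : R) = n%:R^-1 * (- n%:R) by rewrite mulrN mulVf ?lt0r_neq0.
rewrite ler_pM2l ?invr_gt0 //.
apply: (@le_trans _ _ (\sum_(i'' < n) (-1 : R))).
  by rewrite sumrN sumr_const card_ord lexx.

rewrite -[X in X <= _]add0r lerD ?ler0n //; apply: ler_sum => k _.
have := ler0n R (strict_pref (pf j) (Some i) (Some k)).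
have : ((strict_pref (pf j) None (Some k) : nat)%:R : R) <= 1%:R by rewrite ler_nat leq_b1.
lra.
Qed.

Lemma p_ge (i : 'I_n) (j : 'I_m) : (0 < m)%N -> -1 <= p_w R pw i j.
Proof.
move=> m0; rewrite /p_w.
have nP : (0 : R) < m%:R by rewrite ltr0n.
have -> : (-1 : R) = m%:R^-1 * (- m%:R) by rewrite mulrN mulVf ?lt0r_neq0.
rewrite ler_pM2l ?invr_gt0 //.
apply: (@le_trans _ _ (\sum_(i'' < m) (-1 : R))).
  by rewrite sumrN sumr_const card_ord lexx.

rewrite -[X in X <= _]add0r lerD ?ler0n //; apply: ler_sum => k _.
have := ler0n R (strict_pref (pw i) (Some j) (Some k)).
have : ((strict_pref (pw i) None (Some k) : nat)%:R : R) <= 1%:R by rewrite ler_nat leq_b1.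
lra.
Qed.

Lemma q_pos (j : 'I_m) (i : 'I_n) : (pf j None < pf j (Some i))%N -> 0 <= q_f R pf j i.
Proof.
move=> h; rewrite /q_f mulr_ge0 ?invr_ge0 ?ler0n // addr_ge0 ?ler0n //.
apply: sumr_ge0 => k _; rewrite subr_ge0 ler_nat /strict_pref.
by case: ltnP => //= h2; rewrite (ltn_trans h2 h).
Qed.

Lemma p_pos (i : 'I_n) (j : 'I_m) : (pw i None < pw i (Some j))%N -> 0 <= p_w R pw i j.
Proof.
move=> h; rewrite /p_w mulr_ge0 ?invr_ge0 ?ler0n // addr_ge0 ?ler0n //.
apply: sumr_ge0 => k _; rewrite subr_ge0 ler_nat /strict_pref.
by case: ltnP => //= h2; rewrite (ltn_trans h2 h).
Qed.

Lemma row_sum (mu : {ffun 'I_n -> option 'I_m}) i :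
  \sum_(j < m) ((mu i == Some j)%:R : R) <= 1.
Proof.
case E: (mu i) => [j0|].
  rewrite (bigD1 j0) //= eqxx big1 ?addr0 // => j nj.
  by case: eqP => // -[] /esym/eqP; rewrite (negbTE nj).
by rewrite big1 ?ler01.
Qed.

Lemma col_sum (mu : {ffun 'I_n -> option 'I_m}) j :
  (forall i1 i2 j, mu i1 = Some j -> mu i2 = Some j -> i1 = i2) ->
  \sum_(i < n) ((mu i == Some j)%:R : R) <= 1.
Proof.
move=> inj.
case: (pickP (fun i => mu i == Some j)) => [i0 /eqP h|none].
  rewrite (bigD1 i0) //= h eqxx big1 ?addr0 // => i ni.
  by case: eqP => // /(inj _ _ _ h) /esym/eqP; rewrite (negbTE ni).
by rewrite big1 ?ler01 // => i _; rewrite none.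
Qed.

Lemma irv_bound (mu : {ffun 'I_n -> option 'I_m}) :
  (0 < n)%N -> (0 < m)%N ->
  (forall i1 i2 j, mu i1 = Some j -> mu i2 = Some j -> i1 = i2) ->
  (forall i j, mu i = Some j -> goodp pw pf i j) ->
  irv pw pf (matching_matrix R mu) <= 1 / 2.
Proof.
move=> n0 m0 inj good.
pose k := minn n m.
have k0 : (0 < k)%N by rewrite /k leq_min n0 m0.
have kP : (0 : R) < k%:R by rewrite ltr0n.
have kn : (2 * n%:R : R)^-1 <= (2 * k%:R)^-1.
  by rewrite lef_pV2 ?posrE ?mulr_gt0 ?ltr0n // ler_pM2l ?ler_nat ?geq_minl.
have km : (2 * m%:R : R)^-1 <= (2 * k%:R)^-1.
  by rewrite lef_pV2 ?posrE ?mulr_gt0 ?ltr0n // ler_pM2l ?ler_nat ?geq_minr.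
rewrite /irv !mulr_sumr -big_split /=.
apply: (@le_trans _ _ (\sum_(i < n) \sum_(j < m) (2 * k%:R)^-1 * ((mu i == Some j)%:R : R))).
  apply: ler_sum => i _; rewrite !mulr_sumr -big_split; apply: ler_sum => j _ /=.
  rewrite !entryE; case: eqP => [E|_]; last by rewrite !(mulr0, mul0r, addr0).
  rewrite !mul1r mulr1.
  have := q_ge j i n0; have := p_ge i j m0.
  case/orP: (good _ _ E) => [/(@p_pos i j)|/(@q_pos j i)] h1 h2 h3.
    rewrite (max_r (_ : - p_w R pw i j <= 0)) ?oppr_le0 // mulr0 addr0.
    apply: le_trans kn; rewrite ger_pMr ?invr_gt0 ?mulr_gt0 ?ltr0n //.
    by rewrite ge_max ler01 andbT lerNl.
  rewrite (max_r (_ : - q_f R pf j i <= 0)) ?oppr_le0 // mulr0 add0r.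
  apply: le_trans km; rewrite ger_pMr ?invr_gt0 ?mulr_gt0 ?ltr0n //.
  by rewrite ge_max ler01 andbT lerNl.
under eq_bigr do rewrite -mulr_sumr.
rewrite -mulr_sumr.
have sk : \sum_(i < n) \sum_(j < m) ((mu i == Some j)%:R : R) <= k%:R.
  rewrite /k; case: (leqP n m) => h.

    apply: (@le_trans _ _ (\sum_(i < n) (1 : R))); last by rewrite sumr_const card_ord.
    by apply: ler_sum => i _; apply: row_sum.
  rewrite exchange_big /=.
  apply: (@le_trans _ _ (\sum_(j < m) (1 : R))); last by rewrite sumr_const card_ord.
  by apply: ler_sum => j _; apply: col_sum.
apply: le_trans (ler_wpM2l _ sk) _; first by rewrite invr_ge0 mulr_ge0 ?ler0n.
by rewrite invfM -mulrA mulVf ?lt0r_neq0 // mulr1 mul1r lexx.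
Qed.
End Num.
Unset Implicit Arguments. Set Strict Implicit. Set Printing Implicit Defensive.

Theorem proposition5 (R : realType) (n m d de dv : nat)
    (XW : 'M[R]_(n, d)) (XF : 'M[R]_(m, d))
    (WQ WK : 'M[R]_(d, de)) (WV : 'M[R]_(d, dv)) (w : 'rV[R]_dv) (b : R)
    (pw : 'I_n -> option 'I_m -> nat) (pf : 'I_m -> option 'I_n -> nat) :
  (0 < n)%N -> (0 < m)%N ->
  (forall i, injective (pw i)) -> (forall j, injective (pf j)) ->
  irv pw pf (neuralSD_matching XW XF WQ WK WV w b pw pf) <= 1 / 2.
Proof.
move=> n0 m0 pwI pfI; rewrite /neuralSD_matching.
set r := argsort _.
have [inj good] := sd_props pwI pfI r.
exact: irv_bound.
Qed.
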